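(* Let $n\ge2$ and let $F$ be a field. For $\lambda\in F^\times$ let $m_{\lambda,n}$ be the diagonal $n\times n$ matrix with first diagonal entry $\lambda^{-(n-1)}$ and remaining diagonal entries $\lambda$, and let $E=\{m_{\lambda,n}:\lambda\in F^\times\}\le\mathrm{SL}_n(F)$. Let $X$ be the set of matrices $a\in\mathrm{GL}_n(F)$ such that $\dim\ker(a-\lambda1_n)\le\dim\ker(a-1_n)+2$ for all $\lambda\in F^\times$. Then $\mathrm{GL}_n(F)=EX=\{ex: e\in E,\ x\in X\}$. *)

(* Defs.v *)
From mathcomp Require Import all_boot all_order all_algebra.
Set Implicit Arguments. Unset Strict Implicit. Unset Printing Implicit Defensive.
Import GRing.Theory.
Local Open Scope ring_scope.

Definition m_diag (F : fieldType) (n : nat) (l : F) : 'M[F]_n :=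
  diag_mx (\row_(i < n) if (i : nat) == 0%N then l ^- (n - 1) else l).

Definition kerdim (F : fieldType) (n : nat) (A : 'M[F]_n) : nat :=
  \rank (kermx A).

Definition inX (F : fieldType) (n : nat) (a : 'M[F]_n) : Prop :=
  a \in unitmx /\
  forall l : F, l != 0 ->
    (kerdim (a - l%:M) <= kerdim (a - 1%:M) + 2)%N.

(* Main.v *)
Require Import Defs.
From mathcomp Require Import all_boot all_order all_algebra.
From mathcomp Require Import zify.
From Stdlib Require Import Classical.
Local Open Scope ring_scope.
Import GRing.Theory.

Lemma argmin_nz (F : fieldType) (f : F -> nat) :
  exists m : F, m != 0 /\ forall v : F, v != 0 -> (f m <= f v)%N.
Proof.
suff H : forall k (m : F), (f m < k)%N -> m != 0 ->
  exists m : F, m != 0 /\ forall v : F, v != 0 -> (f m <= f v)%N.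
  by apply: (H (f 1).+1 1) => //; exact: oner_neq0.
elim=> [//|k IH] m hm m0.
destruct (classic (forall v : F, v != 0 -> (f m <= f v)%N)) as [H|H].
  by exists m.
apply not_all_ex_not in H as [v Hv].
apply imply_to_and in Hv as [v0 Hv].
apply: (IH v) => //.
move/negP: Hv; rewrite -ltnNge => Hv.
exact: leq_trans Hv hm.
Qed.

Lemma rank_pert (F : fieldType) n (A B : 'M[F]_n) :
  (\rank A <= \rank B + \rank (A - B)%R)%N.
Proof.
have h := mxrank_add (A - B) B; rewrite subrK in h; by rewrite addnC.
Qed.

Lemma rank_unit_l (F : fieldType) n (U B : 'M[F]_n) :
  U \in unitmx -> \rank (U *m B) = \rank B.
Proof.
move=> hU; apply/eqP; rewrite eqn_leq mxrankM_maxr /=.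
rewrite -{1}(mulKmx hU B); exact: mxrankM_maxr.
Qed.

Lemma m_diag_unit (F : fieldType) n (l : F) : l != 0 -> m_diag n l \in unitmx.
Proof.
move=> l0; rewrite unitmxE /m_diag det_diag unitfE.
rewrite prodf_seq_neq0; apply/allP => i _ /=; rewrite mxE.
by case: ifP => _ //; rewrite invr_eq0 expf_neq0.
Qed.

Lemma diff_rank1 (F : fieldType) n (mu nu : F) :
  (\rank ((nu * mu)%:M - nu *: m_diag n.+1 mu)%R <= 1)%N.
Proof.
have -> : (nu * mu)%:M - nu *: m_diag n.+1 mu =
   (nu * mu - nu * mu ^- n) *: delta_mx (ord0 : 'I_n.+1) (ord0 : 'I_n.+1).
  apply/matrixP => i j; rewrite !mxE.
  case: (eqVneq i j) => [<-|ij].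
    case: (eqVneq i ord0) => [->|i0] /=; rewrite ?eqxx /= ?mulr1 ?subn1 //.
    have -> : ((i : nat) == 0%N) = false.
      by apply/negP => /eqP h; move/eqP: i0; apply; apply/val_inj.
    by rewrite mulr1n mulr0 subrr.
  rewrite /= !mulr0n mulr0 subrr.
  case: (eqVneq i ord0) => [i0|i0] /=; last by rewrite mulr0.
  subst i; have -> : (j == ord0) = false by apply/negP => /eqP h; move/eqP: ij; apply; rewrite h.
  by rewrite mulr0.
by rewrite (leq_trans (mxrank_scale _ _)) // mxrank_delta.
Qed.

Lemma subsub (V : zmodType) (x y z : V) : (x - y) - (x - z) = z - y.
Proof. by rewrite opprB addrC addrA subrK. Qed.

Theorem lemma3p1 (F : fieldType) (n : nat) (hn : (2 <= n)%N) (a : 'M[F]_n) :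
  a \in unitmx <->
  exists l : F, exists x : 'M[F]_n, l != 0 /\ inX x /\ a = m_diag n l *m x.
Proof.
case: n hn a => // n _ a.
split; last first.
  move=> [l [x [l0 [[xU _] ->]]]]; by rewrite unitmx_mul m_diag_unit.
move=> aU.
have [mu [mu0 hmin]] := @argmin_nz F (fun v : F => \rank (a - v%:M)).
set M := m_diag n.+1 mu.
have MU : M \in unitmx by exact: m_diag_unit.
exists mu, (invmx M *m a); split => //; split; last by rewrite mulKVmx.
split; first by rewrite unitmx_mul unitmx_inv MU.
have hr : forall v : F, \rank (invmx M *m a - v%:M) = \rank (a - v *: M).
  move=> v; rewrite -(rank_unit_l _ _ (invmx M) (a - v *: M)) ?unitmx_inv //.
  by rewrite mulmxBr -scalemxAr mulVmx // scalemx1.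
move=> v v0; rewrite /kerdim !mxrank_ker !hr.
have h1 : (\rank (a - 1 *: M)%R <= \rank (a - mu%:M)%R + 1)%N.
  apply: leq_trans (rank_pert _ _ _ (a - (1 * mu)%:M)) _.
  rewrite mul1r leq_add2l subsub.
  have := @diff_rank1 _ n mu 1; by rewrite mul1r.
have h2 : (\rank (a - (v * mu)%:M)%R <= \rank (a - v *: M)%R + 1)%N.
  apply: leq_trans (rank_pert _ _ _ (a - v *: M)) _.
  rewrite leq_add2l subsub -mxrank_opp opprB; exact: diff_rank1.
have h3 := hmin (v * mu) (mulf_neq0 v0 mu0).
have h4 := rank_leq_row (a - v *: M).
move: h1 h2 h3 h4.
move: (\rank (a - 1 *: M)%R) (\rank (a - mu%:M)%R) (\rank (a - (v * mu)%:M)%R) (\rank (a - v *: M)%R).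
move=> r1 r2 r3 r4; lia.
Qed.
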